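(* Let $S,T,V$ be ordered trees and let $g\colon V\to T$ and $f\colon T\to S$ be rigid surjections. Let $x$ be a leaf of $S$ and let $y$ be the leaf of $T$ that is $f$-conjugate to $x$. Then \[ f_x\circ g_y=(f\circ g)_x. \]
   Context: A tree is a finite, non-empty poset $(T,\sqsubseteq_T)$ with a smallest element (root) in which the predecessors of each element form a chain (each element is its own predecessor); $v\wedge_T w$ is the largest common predecessor. An ordered tree has a fixed linear order on the immediate successors of each node, inducing the lexicographic linear order $\leq_T$: $v\leq_T w$ if $v\sqsubseteq_T w$, and for incomparable $v,w$, $v\leq_T w$ iff the immediate successor of $v\wedge_T w$ below $v$ precedes the one below $w$. A morphism preserves $\wedge$, is $\leq$-monotone and maps root to root; an embedding is an injective morphism. A function $f\colon T\to S$ is a rigid surjection if there is a morphism $e\colon S\to T$ (unique, called the injection of $f$) with $f\circ e={\rm id}_S$ and $e(f(w))\sqsubseteq_T w$ for all $w$. For $v\in T$, $T^v=\{w\in T\mid w\leq_T v\}$. A leaf is a $\sqsubseteq$-maximal node. For an embedding $i\colon S\to T$, a leaf $y$ of $T$ is $i$-conjugate to a leaf $x$ of $S$ if: (i) when $x$ is the $\leq_S$-largest leaf of $S$, $y$ is the $\leq_T$-largest leaf of $T$; (ii) otherwise, with $x'$ the $\leq_S$-smallest leaf with $x<_S x'$, $y$ is the $\leq_T$-largest leaf with $y<_T i(x')$ and $i(x)\wedge_T i(x')=y\wedge_T i(x')$. A leaf $y$ of $T$ is $f$-conjugate to the leaf $x$ of $S$ if it is $i$-conjugate to $x$ for $i$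 the injection of $f$, and then $f_x:=f\upharpoonright T^y$. Similarly $g_y=g\upharpoonright V^z$ with $z$ the leaf of $V$ that is $g$-conjugate to $y$, and $(f\circ g)_x$ is defined using the rigid surjection $f\circ g$. *)

(* Defs.v *)
From mathcomp Require Import all_boot.
Set Implicit Arguments. Unset Strict Implicit. Unset Printing Implicit Defensive.

(* An ordered tree: a finite poset (sq = "⊑") with a root, in which the
   predecessors of every node form a chain, together with, for each node,
   a strict linear order (sib) on its immediate successors. *)

Definition is_isucc (T : finType) (sq : rel T) (v w : T) : bool :=
  [&& sq v w, v != w & [forall u, (sq v u && sq u w) ==> ((u == v) || (u == w))]].

Record otree : Type := OTree {
  ot_car :> finType;
  ot_sq : rel ot_car;
  ot_sib : rel ot_car;
  ot_root : ot_car;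
  ot_sq_refl : reflexive ot_sq;
  ot_sq_anti : antisymmetric ot_sq;
  ot_sq_trans : transitive ot_sq;
  ot_root_min : forall v, ot_sq ot_root v;
  ot_chain : forall v a b, ot_sq a v -> ot_sq b v -> ot_sq a b || ot_sq b a;
  ot_sib_sibs : forall a b, ot_sib a b ->
      exists v, is_isucc ot_sq v a /\ is_isucc ot_sq v b;
  ot_sib_irr : irreflexive ot_sib;
  ot_sib_trans : transitive ot_sib;
  ot_sib_total : forall v a b, is_isucc ot_sq v a -> is_isucc ot_sq v b ->
      a != b -> ot_sib a b || ot_sib b a
}.

Section Ops.
Variable T : otree.

Definition sq (v w : T) : bool := ot_sq v w.
Definition isucc (v w : T) : bool := is_isucc (@ot_sq T) v w.

Definition is_meet (v w m : T) : bool :=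
  [&& sq m v, sq m w & [forall u, (sq u v && sq u w) ==> sq u m]].
Definition meet (v w : T) : T := odflt (ot_root T) [pick m | is_meet v w m].

Definition lexle (v w : T) : bool :=
  sq v w ||
  [exists a, exists b, [&& isucc (meet v w) a, sq a v, isucc (meet v w) b,
                          sq b w & ot_sib a b]].
Definition lexlt (v w : T) : bool := lexle v w && (v != w).

Definition leaf (v : T) : bool := [forall w, sq v w ==> (w == v)].
Definition maxleaf (v : T) : bool := leaf v && [forall w, leaf w ==> lexle w v].

End Ops.

Definition morphism (S T : otree) (f : S -> T) : Prop :=
  [/\ forall v w, f (meet v w) = meet (f v) (f w),
      forall v w, lexle v w -> lexle (f v) (f w)
    & f (ot_root S) = ot_root T].

Definition embedding (S T : otree) (f : S -> T) : Prop :=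
  morphism f /\ injective f.

Definition injection_of (T S : otree) (f : T -> S) (e : S -> T) : Prop :=
  [/\ morphism e, forall s, f (e s) = s & forall w, sq (e (f w)) w].

Definition rigid_surjection (T S : otree) (f : T -> S) : Prop :=
  exists e, injection_of f e.

Definition iconj (S T : otree) (i : S -> T) (x : S) (y : T) : Prop :=
  [/\ leaf x, leaf y &
    ((maxleaf x /\ maxleaf y) \/
     (exists x' : S,
      [/\ leaf x', lexlt x x',
          (forall x'', leaf x'' -> lexlt x x'' -> lexle x' x''),
          lexlt y (i x') &
          (meet (i x) (i x') = meet y (i x') /\
          forall y', leaf y' -> lexlt y' (i x') ->
                     meet (i x) (i x') = meet y' (i x') -> lexle y' y)]))].

Definition fconj (T S : otree) (f : T -> S) (x : S) (y : T) : Prop :=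
  exists e, injection_of f e /\ iconj e x y.

(* Main.v *)
Require Import Defs.
From mathcomp Require Import all_boot.
Set Implicit Arguments. Unset Strict Implicit. Unset Printing Implicit Defensive.

Lemma ex_maxn (X : finType) (P : pred X) (F : X -> nat) :
  (exists v, P v) -> exists m, P m /\ forall w, P w -> F w <= F m.
Proof.
case=> v Pv; case: (arg_maxnP F Pv) => m Pm Hm; exists m; split=> // w Pw; exact: Hm.
Qed.

Lemma ex_minn (X : finType) (P : pred X) (F : X -> nat) :
  (exists v, P v) -> exists m, P m /\ forall w, P w -> F m <= F w.
Proof.
case=> v Pv; case: (arg_minnP F Pv) => m Pm Hm; exists m; split=> // w Pw; exact: Hm.
Qed.

Section Tree.
Variable T : otree.
Implicit Types u v w a b c l m p q : T.

Lemma sq_refl v : sq v v. Proof. exact: ot_sq_refl. Qed.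
Lemma sq_anti v w : sq v w -> sq w v -> v = w.
Proof. by move=> h1 h2; apply: (@ot_sq_anti T); rewrite /sq in h1 h2; rewrite h1 h2. Qed.
Lemma sq_trans u v w : sq u v -> sq v w -> sq u w.
Proof. move=> h1 h2; exact: (ot_sq_trans h1 h2). Qed.
Lemma sq_chain v a b : sq a v -> sq b v -> sq a b || sq b a.
Proof. exact: ot_chain. Qed.

Definition hh v := #|[set s | sq s v]|.
Lemma hh_lt s t : sq s t -> s != t -> hh s < hh t.
Proof.
move=> hst hne; rewrite /hh; apply: proper_card; rewrite properE; apply/andP; split.
  by apply/subsetP => u; rewrite !inE => hu; exact: sq_trans hu hst.
apply/subsetPn; exists t; rewrite !inE ?sq_refl //.
apply/negP => hts; move/eqP: hne; apply; exact: sq_anti.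
Qed.

Lemma isuccP v a : isucc v a ->
  [/\ sq v a, v != a & forall u, sq v u -> sq u a -> u = v \/ u = a].
Proof.
rewrite /isucc /is_isucc => /and3P [h1 h2 /forallP h3]; split=> // u hu1 hu2.
move: (h3 u); rewrite /sq in hu1 hu2; rewrite hu1 hu2 /= => /orP [/eqP|/eqP]; auto.
Qed.

Lemma child_uniq M a c p : isucc M a -> isucc M c -> sq a p -> sq c p -> a = c.
Proof.
move=> /isuccP[Ma nMa ha] /isuccP[Mc nMc hc] ap cp.
case/orP: (sq_chain ap cp) => h.
  case: (hc a Ma h) => // e; by rewrite e eqxx in nMa.
case: (ha c Mc h) => e; [by rewrite e eqxx in nMc | by []].
Qed.

Lemma child_ex M p : sq M p -> M != p -> exists a, isucc M a /\ sq a p.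
Proof.
move=> hMp hne.
have [a [/and3P[h1 h2 h3] hmin]] :=
  @ex_minn T [pred t | [&& sq M t, t != M & sq t p]] hh
    (ex_intro _ p (introT and3P (And3 hMp (contra (fun e => introT eqP (esym (eqP e))) hne) (sq_refl p)))).
exists a; split=> //.
rewrite /isucc /is_isucc; apply/and3P; split=> //; first by rewrite eq_sym.
apply/forallP => u; apply/implyP => /andP[hu1 hu2].
case: (eqVneq u M) => [//|hne1] /=.
case: (eqVneq u a) => [//|hne2].
have := hmin u; rewrite /= /sq hu1 hne1 (sq_trans hu2 h3 : ot_sq u p) => /(_ isT).
by rewrite leqNgt (hh_lt hu2 hne2).
Qed.

Lemma meet_spec v w : is_meet v w (meet v w).
Proof.
rewrite /meet; case: pickP => [m //|hnone]; exfalso.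
have [m [/andP[m1 m2] hmax]] :=
  @ex_maxn T [pred u | sq u v && sq u w] hh
    (ex_intro _ (ot_root T) (introT andP (conj (ot_root_min v) (ot_root_min w)))).
move: (hnone m); rewrite /is_meet m1 m2 /=.
suff -> : [forall u, sq u v && sq u w ==> sq u m] by [].
apply/forallP => u; apply/implyP => /andP[u1 u2].
case/orP: (sq_chain u1 m1) => // h.
case: (eqVneq m u) => [->|hne]; first exact: sq_refl.
have := hmax u; rewrite /= u1 u2 => /(_ isT).
by rewrite leqNgt (hh_lt h hne).
Qed.

Lemma meet_l v w : sq (meet v w) v.
Proof. by case/and3P: (meet_spec v w). Qed.
Lemma meet_r v w : sq (meet v w) w.
Proof. by case/and3P: (meet_spec v w). Qed.
Lemma meet_max u v w : sq u v -> sq u w -> sq u (meet v w).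
Proof.
case/and3P: (meet_spec v w) => _ _ /forallP h h1 h2.
by move: (h u); rewrite h1 h2.
Qed.
Lemma meet_eq v w M : sq M v -> sq M w ->
  (forall u, sq u v -> sq u w -> sq u M) -> meet v w = M.
Proof.
move=> h1 h2 h3; apply: sq_anti; first exact: h3 (meet_l _ _) (meet_r _ _).
exact: meet_max.
Qed.
Lemma meet_sq v w : sq v w -> meet v w = v.
Proof. by move=> h; apply: meet_eq; [exact: sq_refl | exact: h | move=> u]. Qed.
Lemma meetC v w : meet v w = meet w v.
Proof.
apply: meet_eq; [exact: meet_r | exact: meet_l | move=> u h1 h2; exact: meet_max].
Qed.

Lemma sib_neq a b : ot_sib a b -> a != b.
Proof. by move=> hs; apply/eqP => e; rewrite e ot_sib_irr in hs. Qed.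

Lemma meet_char M a b u w : isucc M a -> isucc M b -> a != b ->
  sq a u -> sq b w -> meet u w = M.
Proof.
move=> ha hb hab au bw.
have [Ma _ _] := isuccP ha; have [Mb _ _] := isuccP hb.
apply: meet_eq; [exact: sq_trans Ma au | exact: sq_trans Mb bw |].
move=> t tu tw.
case/orP: (sq_chain tu (sq_trans Ma au)) => // h.
case: (eqVneq M t) => [->|hne]; first exact: sq_refl.
have [c [hc ct]] := child_ex h hne.
have e1 := child_uniq hc ha (sq_trans ct tu) au.
have e2 := child_uniq hc hb (sq_trans ct tw) bw.
by move: hab; rewrite -e1 -e2 eqxx.
Qed.

Definition wit v w := exists M a b,
  [/\ isucc M a, sq a v, isucc M b, sq b w & ot_sib a b].

Lemma lexleP v w : lexle v w <-> (sq v w \/ wit v w).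
Proof.
split.
  rewrite /lexle; case/orP => [h|/existsP[a /existsP[b /and5P[h1 h2 h3 h4 h5]]]].
    by left.
  by right; exists (meet v w), a, b.
case=> [h|[M [a [b [h1 h2 h3 h4 h5]]]]]; first by rewrite /lexle h.
have e := meet_char h1 h3 (sib_neq h5) h2 h4.
rewrite /lexle; apply/orP; right; apply/existsP; exists a; apply/existsP; exists b.
by rewrite e h1 h2 h3 h4 h5.
Qed.

Lemma lexle_refl v : lexle v v.
Proof. by apply/lexleP; left; exact: sq_refl. Qed.
Lemma sq_lexle v w : sq v w -> lexle v w.
Proof. by move=> h; apply/lexleP; left. Qed.

Lemma lexle_trans u v w : lexle u v -> lexle v w -> lexle u w.
Proof.
move/lexleP=> [h1|[M1 [a1 [b1 [x1 x2 x3 x4 x5]]]]] /lexleP [h2|[M2 [a2 [b2 [y1 y2 y3 y4 y5]]]]].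
- by apply/lexleP; left; exact: sq_trans h1 h2.
- have [Ma2 nMa2 _] := isuccP y1.
  case: (boolP (sq u w)) => [h|hn]; first by apply/lexleP; left.
  case/orP: (sq_chain h1 (sq_trans Ma2 y2)) => hc.
    have [Mb2 _ _] := isuccP y3.
    by move: hn; rewrite (sq_trans hc (sq_trans Mb2 y4)).
  case: (eqVneq M2 u) => [e|hne].
    have [Mb2 _ _] := isuccP y3.
    by move: hn; rewrite -e (sq_trans Mb2 y4).
  have [c [hc1 hc2]] := child_ex hc hne.
  have e := child_uniq hc1 y1 (sq_trans hc2 h1) y2.
  apply/lexleP; right; exists M2, a2, b2; split=> //; by rewrite -e.
- apply/lexleP; right; exists M1, a1, b1; split=> //; exact: sq_trans x4 h2.
- have [Mb1 nMb1 _] := isuccP x3; have [Ma2 nMa2 _] := isuccP y1.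
  case/orP: (sq_chain (sq_trans Mb1 x4) (sq_trans Ma2 y2)) => hc.
  + case: (eqVneq M1 M2) => [e|hne].
      subst M2; have e := child_uniq x3 y1 x4 y2; subst a2.
      apply/lexleP; right; exists M1, a1, b2; split=> //; exact: ot_sib_trans x5 y5.
    have [c [hc1 hc2]] := child_ex hc hne.
    have e := child_uniq hc1 x3 (sq_trans hc2 (sq_trans Ma2 y2)) x4; subst c.
    have [Mb2 _ _] := isuccP y3.
    apply/lexleP; right; exists M1, a1, b1; split=> //.
    exact: sq_trans hc2 (sq_trans Mb2 y4).
  + case: (eqVneq M2 M1) => [e|hne].
      subst M2; have e := child_uniq x3 y1 x4 y2; subst a2.
      apply/lexleP; right; exists M1, a1, b2; split=> //; exact: ot_sib_trans x5 y5.
    have [c [hc1 hc2]] := child_ex hc hne.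
    have e := child_uniq hc1 y1 (sq_trans hc2 (sq_trans Mb1 x4)) y2; subst c.
    have [Ma1 _ _] := isuccP x1.
    apply/lexleP; right; exists M2, a2, b2; split=> //.
    exact: sq_trans hc2 (sq_trans Ma1 x2).
Qed.


Lemma lexle_anti v w : lexle v w -> lexle w v -> v = w.
Proof.
move/lexleP=> [h1|[M1 [a1 [b1 [x1 x2 x3 x4 x5]]]]] /lexleP [h2|[M2 [a2 [b2 [y1 y2 y3 y4 y5]]]]].
- exact: sq_anti.
- have e := child_uniq y1 y3 y2 (sq_trans y4 h1).
  by move: (sib_neq y5); rewrite e eqxx.
- have e := child_uniq x1 x3 x2 (sq_trans x4 h2).
  by move: (sib_neq x5); rewrite e eqxx.
- have e1 := meet_char x1 x3 (sib_neq x5) x2 x4.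
  have e2 := meet_char y1 y3 (sib_neq y5) y2 y4.
  rewrite meetC e1 in e2; subst M2.
  have e3 := child_uniq x1 y3 x2 y4; subst b2.
  have e4 := child_uniq x3 y1 x4 y2; subst a2.
  by have := ot_sib_trans x5 y5; rewrite ot_sib_irr.
Qed.

Lemma lexle_total v w : lexle v w || lexle w v.
Proof.
case: (eqVneq (meet v w) v) => [e|nv].
  by rewrite sq_lexle // -e meet_r.
case: (eqVneq (meet v w) w) => [e|nw].
  by rewrite orbC sq_lexle // -e meet_l.
have [a [ha av]] := child_ex (meet_l v w) nv.
have [b [hb bw]] := child_ex (meet_r v w) nw.
have nab : a != b.
  apply/eqP=> e; subst b; have [Ma nMa _] := isuccP ha.
  by move: nMa; rewrite (sq_anti Ma (meet_max av bw)) eqxx.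
case/orP: (ot_sib_total ha hb nab) => hs; apply/orP; [left|right]; apply/lexleP; right.
  by exists (meet v w), a, b.
by exists (meet v w), b, a.
Qed.

Lemma leaf_sq l w : leaf l -> sq l w -> w = l.
Proof. by rewrite /leaf => /forallP h lw; move/implyP: (h w) => /(_ lw) /eqP. Qed.

Lemma leaf_above v : exists l, leaf l /\ sq v l.
Proof.
have [l [vl hmax]] := @ex_maxn T [pred t | sq v t] hh (ex_intro _ v (sq_refl v)).
exists l; split=> //; apply/forallP=> u; apply/implyP=> lu.
case: (eqVneq u l) => // ne; exfalso.
have := hmax u (sq_trans vl lu).
by rewrite leqNgt (hh_lt lu (contra (fun e => introT eqP (esym (eqP e))) ne)).
Qed.

Lemma ex_lmax (P : pred T) : (exists v, P v) -> exists m, P m /\ forall w, P w -> lexle w m.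
Proof.
move=> hex.
have [m [Pm hm]] := @ex_maxn T P (fun v => #|[set u | lexle u v]|) hex.
exists m; split=> // w Pw.
case/orP: (lexle_total w m) => // hmw.
have sub : [set u | lexle u m] \subset [set u | lexle u w].
  by apply/subsetP=> u; rewrite !inE => hu; exact: lexle_trans hu hmw.
have : [set u | lexle u m] = [set u | lexle u w].
  by apply/eqP; rewrite eqEcard sub /=; exact: hm w Pw.
by move/setP/(_ w); rewrite !inE lexle_refl => ->.
Qed.

Lemma ex_lmin (P : pred T) : (exists v, P v) -> exists m, P m /\ forall w, P w -> lexle m w.
Proof.
move=> hex.
have [m [Pm hm]] := @ex_minn T P (fun v => #|[set u | lexle u v]|) hex.
exists m; split=> // w Pw.
case/orP: (lexle_total w m) => // hmw.
have sub : [set u | lexle u w] \subset [set u | lexle u m].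
  by apply/subsetP=> u; rewrite !inE => hu; exact: lexle_trans hu hmw.
have : [set u | lexle u w] = [set u | lexle u m].
  by apply/eqP; rewrite eqEcard sub /=; exact: hm w Pw.
by move/setP/(_ m); rewrite !inE lexle_refl => ->.
Qed.

Lemma K_lemma M r q q' w : sq M r -> M != r -> sq r q -> sq r q' -> leaf w ->
  lexlt w q -> meet w q = M -> lexlt w q' /\ meet w q' = M.
Proof.
move=> Mr nMr rq rq' lw /andP[hle nwq] hm.
have [c [hc cr]] := child_ex Mr nMr.
have Mw : sq M w by rewrite -hm meet_l.
have nMw : M != w.
  apply/eqP=> e; rewrite -e in lw; move: nMr; by rewrite (leaf_sq lw Mr) eqxx.
have [d [hd dw]] := child_ex Mw nMw.
have ndc : d != c.
  apply/eqP=> e; subst d.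
  have hcM : sq c M by rewrite -hm; apply: meet_max => //; exact: sq_trans cr rq.
  have [Mc nMc _] := isuccP hc.
  by move: nMc; rewrite (sq_anti Mc hcM) eqxx.
have hm' : meet w q' = M := meet_char hd hc ndc dw (sq_trans cr rq').
split=> //.
rewrite /lexlt; apply/andP; split.
  case/lexleP: hle => [wq|[M0 [a [b [h1 h2 h3 h4 h5]]]]].
    have e := leaf_sq lw wq; rewrite e meet_sq ?sq_refl // in hm.
    by move: nMw; rewrite hm eqxx.
  have e := meet_char h1 h3 (sib_neq h5) h2 h4; rewrite hm in e; subst M0.
  have e := child_uniq h3 hc h4 (sq_trans cr rq); subst b.
  apply/lexleP; right; exists M, a, c; split=> //; exact: sq_trans cr rq'.
apply/eqP=> e; subst q'.
rewrite meet_sq ?sq_refl // in hm'.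
by move: nMw; rewrite hm' eqxx.
Qed.


Lemma lexlt_wit v w : leaf v -> lexlt v w -> exists a b,
  [/\ isucc (meet v w) a, sq a v, isucc (meet v w) b, sq b w & ot_sib a b].
Proof.
move=> lv /andP[hle ne]; case/lexleP: hle => [vw|[M [a [b [h1 h2 h3 h4 h5]]]]].
  by move: ne; rewrite (leaf_sq lv vw) eqxx.
have e := meet_char h1 h3 (sib_neq h5) h2 h4; rewrite e.
by exists a, b.
Qed.

Lemma crux m q y y' : sq m q -> m != q -> leaf y -> lexlt y q -> meet y q = m ->
  (forall w, leaf w -> lexlt w q -> meet w q = m -> lexle w y) ->
  leaf y' -> lexlt y y' -> (forall w, leaf w -> lexlt y w -> lexle y' w) ->
  [/\ meet y y' = m, sq m (meet y' q) & m != meet y' q].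
Proof.
move=> mq nmq ly yq hm hmax ly' yy' hnext.
have [a [C [ha ay hC Cq hs]]] := lexlt_wit ly yq.
rewrite hm in ha hC.
have [L [lL CL]] := leaf_above C.
have yL : lexlt y L.
  apply/andP; split.
    apply/lexleP; right; exists m, a, C; split=> //.
  apply/eqP=> e; subst L; move: (sib_neq hs).
  by rewrite (child_uniq ha hC ay CL) eqxx.
have y'L : lexle y' L := hnext L lL yL.
have Ly'_done : lexle L y' -> sq C y'.
  by move=> h; rewrite (lexle_anti y'L h).
have noP : forall d, isucc m d -> sq d y' -> ot_sib d C -> False.
  move=> d hd dy' hdC.
  have hy'P : lexlt y' q.
    apply/andP; split.
      by apply/lexleP; right; exists m, d, C.
    apply/eqP=> e; subst q; move: (sib_neq hdC).
    by rewrite (child_uniq hd hC dy' Cq) eqxx.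
  have hm' : meet y' q = m := meet_char hd hC (sib_neq hdC) dy' Cq.
  have h := hmax y' ly' hy'P hm'.
  case/andP: yy' => h1 h2.
  by move: h2; rewrite (lexle_anti h1 h) eqxx.
have Cy' : sq C y'.
  have [a1 [b1 [x1 x2 x3 x4 x5]]] := lexlt_wit ly yy'.
  set M1 := meet y y' in x1 x3.
  have [Ma _ _] := isuccP ha; have [Ma1 _ _] := isuccP x1.
  case: (eqVneq M1 m) => [e|ne].
    rewrite e in x1 x3.
    have e2 := child_uniq x1 ha x2 ay; subst a1.
    case: (eqVneq b1 C) => [e3|ne3]; first by rewrite -e3.
    case/orP: (ot_sib_total x3 hC ne3) => hh.
      by case: (noP b1 x3 x4 hh).
    by apply: Ly'_done; apply/lexleP; right; exists m, C, b1.
  case/orP: (sq_chain (sq_trans Ma1 x2) (sq_trans Ma ay)) => hc.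
    have [c [hc1 hc2]] := child_ex hc ne.
    have e := child_uniq hc1 x1 (sq_trans hc2 (sq_trans Ma ay)) x2; subst c.
    apply: Ly'_done; apply/lexleP; right; exists M1, a1, b1; split=> //.
    have [MC _ _] := isuccP hC.
    exact: sq_trans hc2 (sq_trans MC CL).
  have [c [hc1 hc2]] := child_ex hc (contra (fun e => introT eqP (esym (eqP e))) ne).
  have e := child_uniq hc1 ha (sq_trans hc2 (sq_trans Ma1 x2)) ay; subst c.
  case: (noP a ha _ hs) => //.
  have [Mb1 _ _] := isuccP x3.
  exact: sq_trans hc2 (sq_trans Mb1 x4).
have [MC nMC _] := isuccP hC.
split.
- exact: meet_char ha hC (sib_neq hs) ay Cy'.
- exact: sq_trans MC (meet_max Cy' Cq).
- apply/eqP=> e; move: nMC.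
  have hCm : sq C m by rewrite e; exact: meet_max Cy' Cq.
  by rewrite (sq_anti MC hCm) eqxx.
Qed.

End Tree.

Lemma morph_sq (S T : otree) (e : S -> T) a b : morphism e -> sq a b -> sq (e a) (e b).
Proof.
case=> hm _ _ h; rewrite -{1}(meet_sq h) hm; exact: meet_r.
Qed.

Lemma morph_lex (S T : otree) (e : S -> T) a b : morphism e -> lexle a b -> lexle (e a) (e b).
Proof. by case=> _ hl _; apply: hl. Qed.

Lemma morph_meet (S T : otree) (e : S -> T) a b : morphism e -> e (meet a b) = meet (e a) (e b).
Proof. by case=> hm _ _; apply: hm. Qed.

Lemma inj_inj (T S : otree) (f : T -> S) e : injection_of f e -> injective e.
Proof. by case=> _ h _; exact: can_inj h. Qed.

Lemma part2b (V T : otree) (g : V -> T) (j : T -> V) (hj : injection_of g j) (y y' : T) (z : V) :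
 leaf y -> leaf y' -> lexlt y y' -> (forall w, leaf w -> lexlt y w -> lexle y' w) ->
 leaf z -> lexlt z (j y') -> meet (j y) (j y') = meet z (j y') ->
 forall w, lexle w z -> lexle (g w) y.
Proof.
move=> ly ly' yy' hnext lz zjy' hm w wz.
have jinj := inj_inj hj.
case: hj => hjm gj jg.
set t := g w.
have tw : sq (j t) w := jg w.
have jtz : lexle (j t) z := lexle_trans (sq_lexle tw) wz.
case: (boolP (lexle t y)) => // nty; exfalso.
have yt : lexle y t by case/orP: (lexle_total t y) => //; rewrite (negbTE nty).
have [a [b [x1 x2 x3 x4 x5]]] := lexlt_wit ly yy'.
set M' := meet y y' in x1 x3.
have jtjy' : j t != j y'.
  apply/eqP=> e; case/andP: zjy' => h1 h2; move: h2.
  have h3 : lexle (j y') z by rewrite -e.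
  by rewrite (lexle_anti h1 h3) eqxx.
have ty' : lexle t y'.
  case/orP: (lexle_total t y') => // h.
  have h2 := morph_lex hjm h.
  by move: jtjy'; rewrite (lexle_anti (lexle_trans jtz (proj1 (andP zjy'))) h2) eqxx.
have [Mb nMb _] := isuccP x3.
have bt : sq b t.
  case/lexleP: ty' => [hty'|[N2 [a2 [b2 [z1 z2 z3 z4 z5]]]]].
    case/orP: (sq_chain hty' (sq_trans Mb x4)) => hc.
      by move: nty; rewrite (sq_lexle (sq_trans hc (meet_l y y'))).
    case: (eqVneq M' t) => [e|ne].
      by move: nty; rewrite -e sq_lexle // meet_l.
    have [c [hc1 hc2]] := child_ex hc ne.
    by rewrite -(child_uniq hc1 x3 (sq_trans hc2 hty') x4).
  have [l [ll tl]] := leaf_above t.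
  have yl : lexlt y l.
    apply/andP; split; first exact: lexle_trans yt (sq_lexle tl).
    apply/eqP=> e; subst l; move: nty; by rewrite sq_lexle.
  have y'l := hnext l ll yl.
  have ly'2 : lexle l y'.
    by apply/lexleP; right; exists N2, a2, b2; split=> //; exact: sq_trans z2 tl.
  have e := lexle_anti y'l ly'2; subst l.
  move: (sib_neq z5).
  by rewrite (child_uniq z1 z3 (sq_trans z2 tl) z4) eqxx.
have hjM : meet (j y) (j y') = j M' by rewrite (morph_meet _ _ hjm).
rewrite hjM in hm.
have jMb : sq (j M') (j b) := morph_sq hjm Mb.
have njMb : j M' != j b by rewrite (inj_eq jinj).
have [c [hc cb]] := child_ex jMb njMb.
have cw : sq c w := sq_trans cb (sq_trans (morph_sq hjm bt) tw).
have cy' : sq c (j y') := sq_trans cb (morph_sq hjm x4).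
have [d [e [z1 z2 z3 z4 z5]]] := lexlt_wit lz zjy'.
rewrite -hm in z1 z3.
have ec := child_uniq z3 hc z4 cy'; subst e.
have zw : lexle z w by apply/lexleP; right; exists (j M'), d, c.
have ewz := lexle_anti wz zw; subst w.
move: (sib_neq z5).
by rewrite (child_uniq z1 hc z2 cw) eqxx.
Qed.

Lemma comp_inj (S T V : otree) (g : V -> T) (f : T -> S) i j :
  injection_of f i -> injection_of g j -> injection_of (f \o g) (fun s => j (i s)).
Proof.
move=> [hi fi ifw] [hj gj jgw]; split.
- split.
  + by move=> v w; rewrite !morph_meet.
  + by move=> v w h; apply: morph_lex hj _; apply: morph_lex hi _.
  + by case: hi => _ _ ->; case: hj => _ _ ->.
- by move=> s /=; rewrite gj fi.
- move=> w /=; apply: sq_trans (jgw w).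
  exact: morph_sq hj (ifw (g w)).
Qed.

Theorem lemma4p15 (S T V : otree) (g : V -> T) (f : T -> S)
  (hg : rigid_surjection g) (hf : rigid_surjection f)
  (x : S) (y : T) (hy : fconj f x y) :
  (exists z : V, fconj g y z) /\
  forall z : V, fconj g y z ->
    [/\ fconj (f \o g) x z & forall w : V, lexle w z -> lexle (g w) y].
Proof.
have hyleaf : leaf y by case: hy => i [_ [_ ly _]].
split.
  case: hg => j hj.
  have jinj := inj_inj hj.
  have hjm : morphism j by case: hj.
  case: (boolP (maxleaf y)) => hmy.
    have [l [ll _]] := leaf_above (ot_root V).
    have [z [lz zmax]] := @ex_lmax V [pred t | leaf t] (ex_intro _ l ll).
    exists z, j; split=> //; split=> //; left; split=> //.
    by rewrite /maxleaf (lz : leaf z); apply/forallP=> w; apply/implyP; exact: zmax.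
  move: hmy; rewrite /maxleaf hyleaf /= => /forallPn [l]; rewrite negb_imply => /andP[ll nly].
  have yl : lexlt y l.
    apply/andP; split; first by case/orP: (lexle_total y l) => //; rewrite (negbTE nly).
    by apply/eqP=> e; subst l; rewrite lexle_refl in nly.
  have [y' [/andP[ly' yy'] hmin]] :=
    @ex_lmin T [pred t | leaf t && lexlt y t] (ex_intro _ l (introT andP (conj ll yl))).
  set Q := [pred w : V | [&& leaf w, lexlt w (j y') & meet (j y) (j y') == meet w (j y')]].
  have hQ : exists w, Q w.
    have hle := morph_lex hjm (proj1 (andP yy')).
    case/lexleP: hle => [hsq|[N [a [b [h1 h2 h3 h4 h5]]]]].
      exfalso; have := meet_sq hsq; rewrite -morph_meet // => /jinj e.
      have hs : sq y y' by rewrite -{1}e; exact: meet_r.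
      have ey := leaf_sq hyleaf hs.
      by case/andP: yy' => _; rewrite ey eqxx.
    have [w0 [lw0 jyw0]] := leaf_above (j y).
    have aw0 := sq_trans h2 jyw0.
    exists w0; rewrite /Q /= lw0 /=; apply/andP; split.
      apply/andP; split; first by apply/lexleP; right; exists N, a, b.
      apply/eqP=> e; subst w0; move: (sib_neq h5).
      by rewrite (child_uniq h1 h3 aw0 h4) eqxx.
    by rewrite (meet_char h1 h3 (sib_neq h5) h2 h4) (meet_char h1 h3 (sib_neq h5) aw0 h4).
  have [z [/and3P[lz zjy' /eqP hmz] zmax]] := ex_lmax hQ.
  exists z, j; split=> //; split=> //; right; exists y'; split=> //.
  - by move=> w lw yw; apply: hmin; rewrite /= lw yw.
  - split=> // w lw wjy' hmw; apply: zmax; by rewrite /Q /= lw wjy' hmw eqxx.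
move=> z [j [hj hz]].
case: hy => i [hi hiy].
have jinj := inj_inj hj; have iinj := inj_inj hi.
have hjm : morphism j by case: hj.
have him : morphism i by case: hi.
case: hiy => lx ly hiy; case: hz => _ lz hz.
split.
  exists (fun s => j (i s)); split; first exact: comp_inj.
  split=> //.
  case: hiy => [[mx my]|[x' [lx' xx' xmin yix' [hm ymax]]]];
    case: hz => [[my' mz]|[y' [ly' yy' ymin zjy' [hm2 zmax]]]].
  - by left.
  - exfalso; case/andP: my => _ /forallP /(_ y') /implyP /(_ ly') h.
    by case/andP: yy' => h1; rewrite (lexle_anti h1 h) eqxx.
  - exfalso; have [L [lL iL]] := leaf_above (i x').
    case/andP: my' => _ /forallP /(_ L) /implyP /(_ lL) h.
    case/andP: yix' => h1 h2.
    have e := lexle_anti (lexle_trans h1 (sq_lexle iL)) h; subst L.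
    by move: h2; rewrite (lexle_anti h1 (sq_lexle iL)) eqxx.
  - right; exists x'.
    set m := meet (i x) (i x').
    have hmi : m = i (meet x x') by rewrite /m morph_meet.
    have mq : sq m (i x') by exact: meet_r.
    have nmq : m != i x'.
      rewrite hmi (inj_eq iinj); apply/eqP=> e.
      have hs : sq x' x by rewrite -{1}e; exact: meet_l.
      have e2 := leaf_sq lx' hs.
      by case/andP: xx' => _; rewrite e2 eqxx.
    have [e1 mr nmr] := crux mq nmq ly yix' (esym hm)
       (fun w lw h1 h2 => ymax w lw h1 (esym h2)) ly' yy' ymin.
    set r := meet y' (i x') in mr nmr.
    have jmr : sq (j m) (j r) := morph_sq hjm mr.
    have njmr : j m != j r by rewrite (inj_eq jinj).
    have jr1 : sq (j r) (j y') := morph_sq hjm (meet_l _ _).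
    have jr2 : sq (j r) (j (i x')) := morph_sq hjm (meet_r _ _).
    have hjm2 : meet (j y) (j y') = j m by rewrite -morph_meet // e1.
    have hjm3 : meet (j (i x)) (j (i x')) = j m by rewrite -morph_meet.
    have [K1 K2] := K_lemma jmr njmr jr1 jr2 lz zjy' (etrans (esym hm2) hjm2).
    split; [done|done|done|exact: K1|]; rewrite hjm3; split; first by rewrite K2.
    move=> w lw wq hw.
    have [K3 K4] := K_lemma jmr njmr jr2 jr1 lw wq (esym hw).
    by apply: zmax => //; rewrite hjm2 K4.
case: hz => [[my' mz]|[y' [ly' yy' ymin zjy' [hm2 zmax]]]].
  move=> w _; have [l [ll tl]] := leaf_above (g w).
  case/andP: my' => _ /forallP /(_ l) /implyP /(_ ll) h.
  exact: lexle_trans (sq_lexle tl) h.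
exact: (part2b hj ly ly' yy' ymin lz zjy' hm2).
Qed.
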